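(* Let $\{e_k\}_{k=1}^\infty$ be the canonical orthonormal basis of the real Hilbert space $\ell_2$, and let $\mathcal{X}=\{x_k\}_{k=1}^\infty\subset\ell_2$ satisfy \[ \sum_{k=1}^\infty\|e_k-x_k\|^2\le\frac18.\] Then $\mathcal{X}$ is not injective.
   Context: A family $\{x_k\}$ in $\ell_2$ is called injective if whenever a Hilbert–Schmidt self-adjoint operator $T$ on $\ell_2$ satisfies $\langle Tx_k,x_k\rangle=0$ for all $k$, then $T=0$. *)

(* Defs.v *)
From Stdlib Require Import Reals.
From Coquelicot Require Import Coquelicot.
Open Scope R_scope.

(* Real l2 = square-summable real sequences indexed by nat (index 0 plays the role of 1). *)
Definition l2 (x : nat -> R) : Prop := ex_series (fun n => (x n) ^ 2).

Definition ip (x y : nat -> R) : R := Series (fun n => x n * y n).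
Definition sqnorm (x : nat -> R) : R := Series (fun n => (x n) ^ 2).

Definition e (k : nat) : nat -> R := fun n => if Nat.eqb n k then 1 else 0.

(* A bounded linear operator on l2, represented as a map on sequences whose
   behaviour is only relevant on l2. *)
Definition bounded_linear_op (T : (nat -> R) -> (nat -> R)) : Prop :=
  (forall x, l2 x -> l2 (T x)) /\
  (forall x y a b, l2 x -> l2 y ->
     forall n, T (fun m => a * x m + b * y m) n = a * T x n + b * T y n) /\
  (exists C, forall x, l2 x -> sqnorm (T x) <= C * sqnorm x).

Definition hilbert_schmidt (T : (nat -> R) -> (nat -> R)) : Prop :=
  bounded_linear_op T /\ ex_series (fun k => sqnorm (T (e k))).

Definition self_adjoint (T : (nat -> R) -> (nat -> R)) : Prop :=
  forall x y, l2 x -> l2 y -> ip (T x) y = ip x (T y).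

Definition injective_family (x : nat -> nat -> R) : Prop :=
  forall T, hilbert_schmidt T -> self_adjoint T ->
    (forall k, ip (T (x k)) (x k) = 0) ->
    forall y, l2 y -> forall n, T y n = 0.

(* Main.v *)
Require Import Defs.
From Stdlib Require Import Reals Lra Lia Psatz.
From Coquelicot Require Import Coquelicot.
Open Scope R_scope.

Lemma ser_lim a l : is_series a l <-> is_lim_seq (sum_f_R0 a) l.
Proof. rewrite is_series_Reals, is_lim_seq_Reals. reflexivity. Qed.

Lemma psum_le a N : (forall n, 0 <= a n) -> ex_series a -> sum_f_R0 a N <= Series a.
Proof.
  intros Ha Hex. apply Series_correct, ser_lim in Hex.
  apply (is_lim_seq_incr_compare _ _ Hex). intros n. rewrite tech5. specialize (Ha (S n)). lra.
Qed.

Lemma term_le a k : (forall n, 0 <= a n) -> ex_series a -> a k <= Series a.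
Proof.
  intros Ha Hex. eapply Rle_trans; [|apply (psum_le a k Ha Hex)].
  destruct k; simpl. lra. pose proof (cond_pos_sum a k Ha). lra.
Qed.

Lemma Series_nonneg a : (forall n, 0 <= a n) -> ex_series a -> 0 <= Series a.
Proof. intros Ha Hex. eapply Rle_trans; [apply (Ha 0%nat)| apply term_le; auto]. Qed.

Lemma ex_le a b : (forall n, Rabs (a n) <= b n) -> ex_series b -> ex_series a.
Proof. intros H Hb. apply (ex_series_le a b); auto. Qed.

Lemma ex_ext (a b : nat -> R) : (forall n, a n = b n) -> ex_series a -> ex_series b.
Proof. intros H [l Hl]. exists l. apply (is_series_ext a b); auto. Qed.

Lemma ex_scal_l c a : ex_series a -> ex_series (fun n => c * a n).
Proof. intros H. apply (ex_ext (fun n => a n * c)). intros; ring. apply ex_series_scal_r; auto. Qed.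

Lemma l2_prod u v : l2 u -> l2 v -> ex_series (fun n => u n * v n).
Proof.
  intros Hu Hv. apply ex_le with (b := fun n => (u n ^2 + v n ^2) / 2).
  - intros n. pose proof (pow2_ge_0 (u n - v n)); pose proof (pow2_ge_0 (u n + v n)).
    unfold Rabs; destruct Rcase_abs; nra.
  - unfold Rdiv. apply ex_series_scal_r. apply (ex_series_plus _ _ Hu Hv).
Qed.

Lemma l2_lin a b u v : l2 u -> l2 v -> l2 (fun n => a * u n + b * v n).
Proof.
  intros Hu Hv. unfold l2. apply (ex_le _ (fun n => 2 * a^2 * u n ^ 2 + 2 * b^2 * v n ^ 2)).
  - intros n. pose proof (pow2_ge_0 (a * u n - b * v n)); pose proof (pow2_ge_0 (a*u n)); pose proof (pow2_ge_0 (b * v n)).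
    cbv beta. rewrite Rabs_right by (apply Rle_ge, pow2_ge_0). nra.
  - apply (ex_series_plus (fun n => 2 * a^2 * u n ^ 2) (fun n => 2 * b^2 * v n ^ 2)).
    + apply (ex_scal_l (2*a^2) (fun n => u n ^2)); auto.
    + apply (ex_scal_l (2*b^2) (fun n => v n ^2)); auto.
Qed.

Lemma l2_ext u v : (forall n, u n = v n) -> l2 u -> l2 v.
Proof. intros H Hu. unfold l2. apply ex_ext with (a := fun n => u n ^2); auto.
  intros n; rewrite H; auto. Qed.

Lemma sqnorm_nonneg u : l2 u -> 0 <= sqnorm u.
Proof. intros Hu. apply Series_nonneg; auto. intros; nra. Qed.

Lemma coord_le u j : l2 u -> u j ^ 2 <= sqnorm u.
Proof. intros Hu. apply (term_le (fun n => u n ^2)); auto. intros; nra. Qed.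

Lemma e_series k f : is_series (fun n => e k n * f n) (f k).
Proof.
  apply ser_lim. apply is_lim_seq_ext_loc with (u := fun _ => f k); [|apply is_lim_seq_const].
  exists k. intros N HN. induction N.
  - assert (k = 0%nat) by lia. subst. simpl. unfold e. simpl. ring.
  - destruct (Nat.eq_dec k (S N)) as [->|Hne].
    + rewrite tech5. unfold e at 2. rewrite Nat.eqb_refl.
      assert (sum_f_R0 (fun n => e (S N) n * f n) N = 0).
      { clear. assert (forall M, (M <= N)%nat -> sum_f_R0 (fun n => e (S N) n * f n) M = 0).
        { induction M; intros HM; simpl. unfold e; simpl. ring.
          rewrite IHM by lia. unfold e. replace (Nat.eqb (S M) (S N)) with false. ring.
          symmetry. apply Nat.eqb_neq. lia. }
        apply H; lia. }
      rewrite H. ring.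
    + rewrite tech5. rewrite IHN by lia. unfold e.
      replace (Nat.eqb (S N) k) with false. ring. symmetry; apply Nat.eqb_neq; lia.
Qed.

Lemma e_Series k f : Series (fun n => e k n * f n) = f k.
Proof. apply is_series_unique, e_series. Qed.
Lemma e_ex k f : ex_series (fun n => e k n * f n).
Proof. eexists; apply e_series. Qed.

Lemma e_01 k n : e k n = 0 \/ e k n = 1.
Proof. unfold e. destruct (Nat.eqb n k); auto. Qed.

Lemma l2_e k : l2 (e k).
Proof. unfold l2. apply (ex_ext (fun n => e k n * 1)).
  intros n. destruct (e_01 k n) as [H|H]; rewrite H; ring. apply e_ex. Qed.

Lemma Series_lin3 a b c : ex_series a -> ex_series b -> ex_series c ->
  Series (fun n => a n + b n + c n) = Series a + Series b + Series c.
Proof. intros. rewrite Series_plus. rewrite Series_plus; auto.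
  apply (ex_series_plus a b); auto. auto. Qed.

Lemma CS u v : l2 u -> l2 v -> ip u v ^ 2 <= sqnorm u * sqnorm v.
Proof.
  intros Hu Hv.
  assert (Q : forall t, 0 <= sqnorm u + 2 * t * ip u v + t^2 * sqnorm v).
  { intros t. unfold sqnorm, ip.
    rewrite <- Series_scal_l, <- (Series_scal_l (t^2)).
    rewrite <- Series_lin3.
    - apply Series_nonneg. intros n; cbv beta; pose proof (pow2_ge_0 (u n + t * v n)); nra.
      apply (ex_ext (fun n => (u n + t * v n)^2)). intros; ring.
      apply (l2_lin 1 t u v) in Hv; auto. eapply l2_ext; [|exact Hv]. intros; simpl; ring.
    - auto.
    - apply (ex_scal_l (2*t) (fun n => u n * v n)). apply l2_prod; auto.
    - apply (ex_scal_l (t^2) (fun n => v n ^2)). auto. }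
  pose proof (sqnorm_nonneg u Hu). pose proof (sqnorm_nonneg v Hv).
  set (A := sqnorm u) in *. set (B := ip u v) in *. set (C := sqnorm v) in *.
  destruct (Req_dec C 0) as [HC|HC].
  - destruct (Req_dec B 0) as [HB|HB]. rewrite HB. nra.
    specialize (Q (- (A+1) / (2*B))). rewrite HC in Q.
    replace (2 * (- (A + 1) / (2 * B)) * B) with (-(A+1)) in Q by (field; auto). nra.
  - specialize (Q (- B / C)).
    assert (0 < C) by lra.
    replace (A + 2 * (- B / C) * B + (- B / C) ^ 2 * C) with ((A*C - B^2)/C) in Q by (field; auto).
    assert (0 <= A*C - B^2). { apply Rmult_le_reg_r with (/C). apply Rinv_0_lt_compat; lra.
      rewrite Rmult_0_l. exact Q. }
    nra.
Qed.
Lemma lim_sq f (l : R) : is_lim_seq f l -> is_lim_seq (fun L => f L ^ 2) (l ^ 2).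
Proof. intros H. apply is_lim_seq_ext with (u := fun L => f L * f L). intros; ring.
  replace (l^2) with (l*l) by ring. apply is_lim_seq_mult'; auto. Qed.

Lemma fatou (w : nat -> nat -> R) (u : nat -> R) (B : R) : (forall L, l2 (w L)) -> (forall L, sqnorm (w L) <= B) ->
  (forall j, is_lim_seq (fun L => w L j) (u j)) -> l2 u /\ sqnorm u <= B.
Proof.
  intros Hw HB Hl.
  assert (Hlim : forall N, is_lim_seq (fun L => sum_f_R0 (fun j => w L j ^2) N) (sum_f_R0 (fun j => u j ^2) N)).
  { induction N; simpl. apply lim_sq; auto. apply is_lim_seq_plus'; auto. apply lim_sq; auto. }
  assert (Hb : forall N, sum_f_R0 (fun j => u j ^2) N <= B).
  { intros N. pose proof (is_lim_seq_le _ (fun _ => B) _ _ (fun L => Rle_trans _ _ _ (psum_le _ N (fun n => pow2_ge_0 _) (Hw L)) (HB L)) (Hlim N) (is_lim_seq_const B)).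
    simpl in H. exact H. }
  destruct (ex_finite_lim_seq_incr (sum_f_R0 (fun j => u j ^2)) B) as [l Hl2].
  { intros n. rewrite tech5. pose proof (pow2_ge_0 (u (S n))). lra. }
  { auto. }
  assert (is_series (fun j => u j ^2) l) by (apply ser_lim; auto).
  split. exists l; auto. unfold sqnorm. rewrite (is_series_unique _ _ H).
  pose proof (is_lim_seq_le _ (fun _ => B) _ _ Hb Hl2 (is_lim_seq_const B)). simpl in H0. exact H0.
Qed.
Lemma ex_plus (a b : nat -> R) : ex_series a -> ex_series b -> ex_series (fun n => a n + b n).
Proof. intros Ha Hb. exact (ex_series_plus a b Ha Hb). Qed.

Lemma Series_sum (f : nat -> nat -> R) L : (forall i, ex_series (f i)) ->
  ex_series (fun j => sum_f_R0 (fun i => f i j) L) /\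
  Series (fun j => sum_f_R0 (fun i => f i j) L) = sum_f_R0 (fun i => Series (f i)) L.
Proof.
  intros H. induction L; simpl.
  - split; auto. 
  - destruct IHL as [IH1 IH2]. split. apply ex_plus; auto.
    rewrite Series_plus; auto. rewrite IH2. reflexivity.
Qed.

Lemma wcs (f w : nat -> R) L : (forall i, 0 < w i) ->
  (sum_f_R0 f L)^2 <= sum_f_R0 w L * sum_f_R0 (fun i => f i ^2 / w i) L.
Proof.
  intros Hw. induction L.
  - simpl. specialize (Hw 0%nat). right. field. lra.
  - rewrite !tech5. set (A := sum_f_R0 f L) in *. set (W := sum_f_R0 w L) in *.
    set (S := sum_f_R0 (fun i => f i ^2 / w i) L) in *.
    assert (HW : 0 < W). { unfold W. clear -Hw. induction L; simpl. apply Hw. specialize (Hw (S L)). lra. }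
    assert (HS : 0 <= S). { unfold S. apply cond_pos_sum. intros i. specialize (Hw i).
      apply Rmult_le_pos. apply pow2_ge_0. left; apply Rinv_0_lt_compat; auto. }
    pose proof (Hw (Datatypes.S L)) as Hw1. set (x := f (Datatypes.S L)). set (v := w (Datatypes.S L)) in *.
    set (y := x / v).
    assert (Hx : x = v * y) by (unfold y; field; lra).
    assert (Hxx : x^2 / v = v * y^2) by (rewrite Hx; field; lra).
    rewrite Hxx, Hx.
    assert (K : 2 * A * y <= W * y^2 + S).
    { assert (W * (W * y^2 + S - 2 * A * y) >= 0).
      { pose proof (pow2_ge_0 (W*y - A)). nra. }
      assert (0 <= W * y ^ 2 + S - 2 * A * y).
      { destruct (Rle_lt_dec 0 (W * y ^ 2 + S - 2 * A * y)); auto. nra. }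
      lra. }
    assert (0 <= v * (W * y^2 + S - 2*A*y)) by (apply Rmult_le_pos; lra).
    nra.
Qed.
Definition Nop (m : nat -> nat -> R) (v : nat -> R) (k : nat) : R := Series (fun j => m k j * v j).

Lemma sq_abs x : Rabs (x ^ 2) = x ^ 2.
Proof. apply Rabs_right. apply Rle_ge, pow2_ge_0. Qed.

Lemma Nop_bound m v : (forall k, l2 (m k)) -> ex_series (fun k => sqnorm (m k)) -> l2 v ->
  l2 (Nop m v) /\ sqnorm (Nop m v) <= Series (fun k => sqnorm (m k)) * sqnorm v.
Proof.
  intros Hm Hs Hv.
  assert (P : forall k, 0 <= Nop m v k ^ 2 <= sqnorm (m k) * sqnorm v).
  { intros k. split. apply pow2_ge_0. apply CS; auto. }
  assert (E : ex_series (fun k => sqnorm (m k) * sqnorm v)) by (apply ex_series_scal_r; auto).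
  split.
  - unfold l2. apply (ex_le _ _ (fun k => Rle_trans _ _ _ (Req_le _ _ (sq_abs _)) (proj2 (P k))) E).
  - unfold sqnorm at 1. rewrite <- Series_scal_r. apply Series_le; auto.
Qed.

Lemma Nop_minus m v w k : l2 (m k) -> l2 v -> l2 w ->
  Nop m (fun j => v j - w j) k = Nop m v k - Nop m w k.
Proof.
  intros Hm Hv Hw. unfold Nop. rewrite <- Series_minus by (apply l2_prod; auto).
  apply Series_ext. intros; ring.
Qed.

Fixpoint it (m : nat -> nat -> R) (b : nat -> R) (i : nat) : nat -> R :=
  match i with 0%nat => b | S i => fun k => - Nop m (it m b i) k end.

Lemma sqnorm_opp v : sqnorm (fun k => - v k) = sqnorm v.
Proof. unfold sqnorm. apply Series_ext. intros; ring. Qed.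

Lemma l2_opp v : l2 v -> l2 (fun k => - v k).
Proof. intros H. apply (l2_ext (fun n => -1 * v n + 0 * v n)). intros; ring. apply l2_lin; auto. Qed.

Lemma it_bound m b i : (forall k, l2 (m k)) -> ex_series (fun k => sqnorm (m k)) ->
  Series (fun k => sqnorm (m k)) <= 3/4 -> l2 b ->
  l2 (it m b i) /\ sqnorm (it m b i) <= (3/4)^i * sqnorm b.
Proof.
  intros Hm Hs Hq Hb. induction i.
  - simpl. split; auto. lra.
  - destruct IHi as [I1 I2]. destruct (Nop_bound m (it m b i) Hm Hs I1) as [N1 N2].
    simpl. split. apply l2_opp; auto.
    rewrite sqnorm_opp. pose proof (sqnorm_nonneg _ I1).
    eapply Rle_trans. exact N2. 
    apply Rle_trans with (3/4 * sqnorm (it m b i)). apply Rmult_le_compat_r; auto.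
    rewrite Rmult_assoc. apply Rmult_le_compat_l; lra.
Qed.

Lemma geom_sum_le r L : 0 <= r < 1 -> sum_f_R0 (fun i => r ^ i) L <= / (1 - r).
Proof.
  intros Hr. destruct (Req_dec r 0) as [->|Hr0].
  - assert (forall L, sum_f_R0 (fun i => 0 ^ i) L = 1).
    { induction L0; simpl; auto. rewrite IHL0. ring. }
    rewrite H. rewrite Rminus_0_r, Rinv_1. lra.
  - rewrite tech3 by lra. unfold Rdiv. pattern (/ (1 - r)) at 2. rewrite <- Rmult_1_l.
    apply Rmult_le_compat_r.
    left; apply Rinv_0_lt_compat; lra.
    pose proof (pow_le r (S L) (proj1 Hr)). lra.
Qed.
Lemma tailsum (f : nat -> nat -> R) C L : (forall i, l2 (f i)) -> (forall i, sqnorm (f i) <= C * (3/4)^i) ->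
  l2 (fun j => sum_f_R0 (fun i => f i j) L) /\ sqnorm (fun j => sum_f_R0 (fun i => f i j) L) <= 56 * C.
Proof.
  intros Hf HC.
  assert (C0 : 0 <= C). { pose proof (HC 0%nat). pose proof (sqnorm_nonneg _ (Hf 0%nat)). simpl in H. lra. }
  set (g := fun i j => f i j ^ 2 * / (7/8)^i).
  assert (Wp : forall i, 0 < (7/8)^i) by (intros; apply pow_lt; lra).
  assert (Hg : forall i, ex_series (g i)) by (intros; apply ex_series_scal_r; apply Hf).
  assert (Gp : forall j, 0 <= sum_f_R0 (fun i => g i j) L).
  { intros j. apply cond_pos_sum. intros i. unfold g. apply Rmult_le_pos. apply pow2_ge_0. left; apply Rinv_0_lt_compat; auto. }
  assert (P : forall j, 0 <= (sum_f_R0 (fun i => f i j) L)^2 <= 8 * sum_f_R0 (fun i => g i j) L).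
  { intros j. split. apply pow2_ge_0. eapply Rle_trans. apply (wcs (fun i => f i j) (fun i => (7/8)^i) L Wp).
    apply Rmult_le_compat_r. apply Gp. eapply Rle_trans. apply geom_sum_le. lra. lra. }
  destruct (Series_sum g L Hg) as [S1 S2].
  assert (E : ex_series (fun j => 8 * sum_f_R0 (fun i => g i j) L)) by (apply ex_scal_l; auto).
  split.
  - unfold l2. apply (ex_le _ _ (fun j => Rle_trans _ _ _ (Req_le _ _ (sq_abs _)) (proj2 (P j))) E).
  - unfold sqnorm. eapply Rle_trans. apply Series_le; [exact P| exact E].
    rewrite Series_scal_l, S2.
    assert (sum_f_R0 (fun i => Series (g i)) L <= sum_f_R0 (fun i => C * (6/7)^i) L).
    { apply sum_Rle. intros i _. unfold g. rewrite Series_scal_r.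
      replace (C * (6/7)^i) with (C * (3/4)^i * / (7/8)^i).
      apply Rmult_le_compat_r. left; apply Rinv_0_lt_compat; auto. apply HC.
      replace (3/4) with (6/7 * (7/8)) by field. rewrite Rpow_mult_distr. field.
      apply pow_nonzero; lra. }
    assert (sum_f_R0 (fun i => C * (6/7)^i) L <= C * 7).
    { rewrite (sum_eq _ (fun i => (6/7)^i * C)) by (intros; ring).
      rewrite <- scal_sum. apply Rmult_le_compat_l; auto.
      assert (/ (1 - 6/7) = 7) by field. eapply Rle_trans; [apply geom_sum_le; lra| lra]. }
    lra.
Qed.
Lemma lim_from_sq (x : nat -> R) (l c : R) : (forall L, (x L - l)^2 <= c * (3/4)^L) -> is_lim_seq x l.
Proof.
  intros H. set (y := fun L => sqrt (c * (3/4)^L)).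
  assert (Hy : is_lim_seq y 0).
  { rewrite <- sqrt_0. unfold y. apply is_lim_seq_continuous. apply continuity_pt_sqrt; lra.
    replace 0 with (c * 0) by ring. apply is_lim_seq_mult'. apply is_lim_seq_const.
    apply is_lim_seq_geom. rewrite Rabs_right; lra. }
  assert (B : forall L, Rabs (x L - l) <= y L).
  { intros L. rewrite <- sqrt_Rsqr_abs. unfold y. apply sqrt_le_1_alt. unfold Rsqr.
    specialize (H L). simpl in H. lra. }
  apply is_lim_seq_le_le with (u := fun L => l - y L) (w := fun L => l + y L).
  - intros L. specialize (B L). unfold Rabs in B. destruct Rcase_abs in B; lra.
  - replace (Finite l) with (Finite (l - 0)) by (f_equal; ring). apply is_lim_seq_minus'; auto. apply is_lim_seq_const.
  - replace (Finite l) with (Finite (l + 0)) by (f_equal; ring). apply is_lim_seq_plus'; auto. apply is_lim_seq_const.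
Qed.

Lemma sum_opp' (g : nat -> R) L : sum_f_R0 (fun i => - g i) L = - sum_f_R0 g L.
Proof. induction L; simpl. ring. rewrite IHL. ring. Qed.

Lemma sum_mul_l (c : R) (g : nat -> R) L : c * sum_f_R0 g L = sum_f_R0 (fun i => c * g i) L.
Proof. induction L; simpl. ring. rewrite <- IHL. ring. Qed.

Lemma solve m b : (forall k, l2 (m k)) -> ex_series (fun k => sqnorm (m k)) ->
  Series (fun k => sqnorm (m k)) <= 3/4 -> l2 b ->
  exists a, l2 a /\ forall k, a k + Nop m a k = b k.
Proof.
  intros Hm Hs Hq Hb.
  set (B := sqnorm b).
  assert (B0 : 0 <= B) by (apply sqnorm_nonneg; auto).
  assert (IB : forall i, l2 (it m b i) /\ sqnorm (it m b i) <= (3/4)^i * B) by (intros; apply it_bound; auto).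
  assert (CB : forall i j, Rabs (it m b i j) <= (B * (6/7)^i + (7/8)^i)/2).
  { intros i j. set (x := it m b i j).
    assert (Hx : x^2 <= (6/7)^i * (7/8)^i * B).
    { rewrite <- Rpow_mult_distr. replace (6/7 * (7/8)) with (3/4) by field.
      eapply Rle_trans. apply coord_le, IB. apply IB. }
    assert (Hp : 0 < (7/8)^i) by (apply pow_lt; lra).
    assert (Hs0 : 0 <= (6/7)^i) by (apply pow_le; lra).
    set (p := (7/8)^i) in *. set (s := (6/7)^i) in *.
    rewrite <- pow2_abs in Hx. pose proof (Rabs_pos x). set (ax := Rabs x) in *.
    assert (p * (B * s + p - 2 * ax) >= 0).
    { pose proof (pow2_ge_0 (ax - p)). nra. }
    assert (0 <= B * s + p - 2 * ax).
    { destruct (Rle_lt_dec 0 (B * s + p - 2 * ax)); auto. nra. }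
    lra. }
  assert (Egeo : ex_series (fun i => (B * (6/7)^i + (7/8)^i)/2)).
  { unfold Rdiv. apply ex_series_scal_r. apply ex_plus.
    apply ex_scal_l. eexists. apply is_series_geom. rewrite Rabs_right; lra.
    eexists. apply is_series_geom. rewrite Rabs_right; lra. }
  assert (Eit : forall j, ex_series (fun i => it m b i j)).
  { intros j. apply ex_series_Rabs. apply (ex_le _ _ (fun i => Rle_trans _ _ _ (Req_le _ _ (Rabs_Rabsolu _)) (CB i j)) Egeo). }
  set (a := fun j => Series (fun i => it m b i j)).
  set (s := fun L j => sum_f_R0 (fun i => it m b i j) L).
  set (d := fun M j => a j - s M j).
  assert (Hsl : forall L, l2 (s L)).
  { intros L. apply (tailsum (it m b) B L). intros; apply IB. intros i. rewrite Rmult_comm. apply IB. }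
  assert (Hd : forall M, l2 (d M) /\ sqnorm (d M) <= 56 * (B * (3/4)^(S M))).
  { intros M.
    assert (Ht : forall L, l2 (fun j => sum_f_R0 (fun i => it m b (S M + i) j) L) /\
       sqnorm (fun j => sum_f_R0 (fun i => it m b (S M + i) j) L) <= 56 * (B * (3/4)^(S M))).
    { intros L. apply (tailsum (fun i => it m b (S M + i))). intros; apply IB.
      intros i. rewrite Rmult_assoc, <- pow_add, Rmult_comm. apply IB. }
    apply (fatou (fun L j => sum_f_R0 (fun i => it m b (S M + i) j) L)).
    - intros L. apply (proj1 (Ht L)).
    - intros L. apply (proj2 (Ht L)).
    - intros j. unfold d, a, s. rewrite (Series_incr_n _ (S M)) by (auto; lia). simpl pred.
      replace (sum_f_R0 (fun i : nat => it m b i j) M + Series (fun k : nat => it m b (S M + k) j) -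
        sum_f_R0 (fun i : nat => it m b i j) M) with (Series (fun k : nat => it m b (S M + k) j)) by ring.
      apply ser_lim. apply Series_correct. apply (ex_series_incr_n (fun i => it m b i j) (S M)). auto. }
  assert (Ha : l2 a).
  { apply (l2_ext (fun n => 1 * d 0%nat n + 1 * b n)).
    intros n. unfold d, s. simpl. ring. apply l2_lin; auto. apply Hd. }
  exists a. split; auto. intros k.
  assert (Hlim1 : is_lim_seq (fun L => sum_f_R0 (fun i => it m b (S i) k) L) (a k - b k)).
  { unfold a. rewrite (Series_incr_1 _ (Eit k)). change (it m b 0 k) with (b k).
    replace (b k + Series (fun k0 : nat => it m b (S k0) k) - b k) with (Series (fun k0 : nat => it m b (S k0) k)) by ring.
    apply ser_lim, Series_correct. apply (ex_series_incr_1 (fun i => it m b i k)). auto. }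
  assert (Hsum : forall L, sum_f_R0 (fun i => it m b (S i) k) L = - Nop m (s L) k).
  { intros L. simpl it. rewrite sum_opp'. f_equal. unfold Nop, s.
    rewrite (Series_ext _ (fun j => sum_f_R0 (fun i => m k j * it m b i j) L)) by (intros; apply sum_mul_l).
    symmetry. apply (Series_sum (fun i j => m k j * it m b i j)). intros i. apply l2_prod; auto. apply IB. }
  assert (Hlim2 : is_lim_seq (fun L => Nop m (s L) k) (Nop m a k)).
  { apply (lim_from_sq _ _ (sqnorm (m k) * (56 * (B * (3/4))))). intros L.
    replace (Nop m (s L) k - Nop m a k) with (- Nop m (d L) k).
    2:{ unfold d. rewrite Nop_minus; auto. ring. }
    replace ((- Nop m (d L) k)^2) with (Nop m (d L) k ^2) by ring.
    eapply Rle_trans. apply CS; auto. apply Hd.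
    replace (sqnorm (m k) * (56 * (B * (3 / 4))) * (3 / 4) ^ L) with (sqnorm (m k) * (56 * (B * (3/4)^(S L)))) by (simpl; ring).
    apply Rmult_le_compat_l. apply sqnorm_nonneg; auto. apply Hd. }
  apply is_lim_seq_opp in Hlim2. simpl in Hlim2.
  apply (is_lim_seq_ext _ (fun L => sum_f_R0 (fun i => it m b (S i) k) L)) in Hlim2.
  2:{ intros L. rewrite Hsum. reflexivity. }
  apply is_lim_seq_unique in Hlim1. apply is_lim_seq_unique in Hlim2.
  rewrite Hlim1 in Hlim2. injection Hlim2. intros. lra.
Qed.
Lemma e_sq k n : e k n ^ 2 = e k n.
Proof. destruct (e_01 k n) as [H|H]; rewrite H; ring. Qed.

Lemma e_sym k n : e k n = e n k.
Proof. unfold e. rewrite Nat.eqb_sym. reflexivity. Qed.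

Section Main.
Variable a : nat -> R.
Hypothesis Ha : l2 a.

Definition Top (y : nat -> R) (n : nat) : R := e 0 n * y 1%nat + e 1 n * y 0%nat + a n * y n.

Lemma PB y n : (Top y n)^2 <= e 0 n * (3 * y 1%nat ^2) + e 1 n * (3 * y 0%nat ^2) + 3 * (a n ^2 * y n ^2).
Proof.
  unfold Top. set (u := e 0 n * y 1%nat). set (v := e 1 n * y 0%nat). set (w := a n * y n).
  assert (u^2 = e 0 n * y 1%nat ^2) by (unfold u; rewrite Rpow_mult_distr, e_sq; ring).
  assert (v^2 = e 1 n * y 0%nat ^2) by (unfold v; rewrite Rpow_mult_distr, e_sq; ring).
  assert (w^2 = a n ^2 * y n ^2) by (unfold w; ring).
  pose proof (pow2_ge_0 (u - v)). pose proof (pow2_ge_0 (u - w)). pose proof (pow2_ge_0 (v - w)).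
  nra.
Qed.

Lemma RHS_ex y : l2 y -> ex_series (fun n => e 0 n * (3 * y 1%nat ^2) + e 1 n * (3 * y 0%nat ^2) + 3 * (a n ^2 * y n ^2)).
Proof.
  intros Hy. apply ex_plus. apply ex_plus; apply e_ex. apply ex_scal_l.
  apply (ex_le _ (fun n => sqnorm a * y n ^2)).
  - intros n. rewrite Rabs_right. apply Rmult_le_compat_r. apply pow2_ge_0. apply coord_le; auto.
    apply Rle_ge. apply Rmult_le_pos; apply pow2_ge_0.
  - apply ex_scal_l. auto.
Qed.

Lemma Top_l2 y : l2 y -> l2 (Top y).
Proof.
  intros Hy. unfold l2. apply (ex_le _ _ (fun n => Rle_trans _ _ _ (Req_le _ _ (sq_abs _)) (PB y n)) (RHS_ex y Hy)).
Qed.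

Lemma Top_sq y : l2 y -> sqnorm (Top y) <= 3 * y 1%nat ^2 + 3 * y 0%nat ^2 + 3 * Series (fun n => a n ^2 * y n ^2).
Proof.
  intros Hy. unfold sqnorm at 1. eapply Rle_trans. apply Series_le. intros n. split. apply pow2_ge_0. apply PB.
  apply RHS_ex; auto.
  rewrite Series_lin3. rewrite !e_Series, Series_scal_l. lra.
  apply e_ex. apply e_ex.
  apply ex_scal_l.
  apply (ex_le _ (fun n => sqnorm a * y n ^2)).
  - intros n. rewrite Rabs_right. apply Rmult_le_compat_r. apply pow2_ge_0. apply coord_le; auto.
    apply Rle_ge. apply Rmult_le_pos; apply pow2_ge_0.
  - apply ex_scal_l. auto.
Qed.
End Main.
Lemma ex_aysq a y : l2 a -> l2 y -> ex_series (fun n => a n ^2 * y n ^2).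
Proof.
  intros Ha Hy. apply (ex_le _ (fun n => sqnorm a * y n ^2)).
  - intros n. rewrite Rabs_right. apply Rmult_le_compat_r. apply pow2_ge_0. apply coord_le; auto.
    apply Rle_ge. apply Rmult_le_pos; apply pow2_ge_0.
  - apply ex_scal_l. auto.
Qed.

Lemma l2_ay a y : l2 a -> l2 y -> l2 (fun n => a n * y n).
Proof. intros Ha Hy. unfold l2. apply (ex_ext (fun n => a n ^2 * y n ^2)). intros; ring. apply ex_aysq; auto. Qed.

Theorem mainTheorem16 (x : nat -> nat -> R) :
  (forall k, l2 (x k)) ->
  ex_series (fun k => sqnorm (fun n => e k n - x k n)) ->
  Series (fun k => sqnorm (fun n => e k n - x k n)) <= 1 / 8 ->
  ~ injective_family x.
Proof.
  intros Hx Hex Hle Hinj.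
  set (g := fun k n => e k n - x k n).
  assert (Hg : forall k, l2 (g k)).
  { intros k. apply (l2_ext (fun n => 1 * e k n + (-1) * x k n)). intros; unfold g; ring.
    apply l2_lin; auto. apply l2_e. }
  assert (Hgs : forall k, sqnorm (g k) <= 1/8).
  { intros k. eapply Rle_trans; [|exact Hle]. apply (term_le (fun k => sqnorm (g k))); auto.
    intros; apply sqnorm_nonneg; auto. }
  assert (Hgc : forall k n, g k n ^2 <= 1/8).
  { intros k n. eapply Rle_trans. apply coord_le; auto. auto. }
  assert (Hxe : forall k n, x k n = e k n - g k n) by (intros; unfold g; ring).
  set (m := fun k j => x k j ^2 - e k j).
  assert (Hmp : forall k j, Rabs (m k j ^2) <= 6 * g k j ^2).
  { intros k j. rewrite sq_abs. unfold m. rewrite Hxe. specialize (Hgc k j). set (t := g k j) in *.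
    destruct (e_01 k j) as [H|H]; rewrite H.
    - replace ((0 - t)^2 - 0) with (t^2) by ring.
      assert (t^2 * t^2 <= t^2 * (1/8)) by (apply Rmult_le_compat_l; auto; apply pow2_ge_0).
      assert (0 <= t^2) by apply pow2_ge_0. nra.
    - replace ((1 - t)^2 - 1) with (t * (t - 2)) by ring.
      assert (t > -2/5). { destruct (Rle_lt_dec t (-2/5)); [|lra]. nra. }
      assert ((t-2)^2 <= 6) by nra.
      replace ((t * (t - 2))^2) with (t^2 * (t-2)^2) by ring.
      rewrite (Rmult_comm 6). apply Rmult_le_compat_l; auto. apply pow2_ge_0. }
  assert (Hm : forall k, l2 (m k)).
  { intros k. unfold l2. apply (ex_le _ _ (Hmp k)). apply ex_scal_l. apply Hg. }
  assert (Hmn : forall k, sqnorm (m k) <= 6 * sqnorm (g k)).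
  { intros k. unfold sqnorm at 2. rewrite <- Series_scal_l. apply Series_le.
    intros n. split. apply pow2_ge_0. rewrite <- sq_abs. apply Hmp. apply ex_scal_l, Hg. }
  assert (Hs : ex_series (fun k => sqnorm (m k))).
  { apply (ex_le _ (fun k => 6 * sqnorm (g k))). intros k. rewrite Rabs_right. apply Hmn.
    apply Rle_ge, sqnorm_nonneg; auto. apply ex_scal_l. exact Hex. }
  assert (Hq : Series (fun k => sqnorm (m k)) <= 3/4).
  { eapply Rle_trans. apply Series_le. intros k. split. apply sqnorm_nonneg; auto. apply Hmn.
    apply ex_scal_l, Hex. rewrite Series_scal_l. unfold g in *. lra. }
  set (b := fun k => -2 * (x k 0%nat * x k 1%nat)).
  assert (Hx4 : forall k n, x k n ^2 <= 4).
  { intros k n. rewrite Hxe. specialize (Hgc k n). set (t := g k n) in *.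
    assert (t > -2/5). { destruct (Rle_lt_dec t (-2/5)); [|lra]. nra. }
    assert (t < 2/5). { destruct (Rle_lt_dec (2/5) t); [|lra]. nra. }
    destruct (e_01 k n) as [He|He]; rewrite He; nra. }
  assert (Hb : l2 b).
  { unfold l2. apply (ex_le _ (fun k => 16 * sqnorm (g k))); [| apply ex_scal_l, Hex].
    intros k. rewrite sq_abs. unfold b.
    replace ((-2 * (x k 0%nat * x k 1%nat))^2) with (4 * (x k 0%nat ^2 * x k 1%nat ^2)) by ring.
    destruct (Nat.eq_dec k 0) as [->|Hk].
    - assert (x 0%nat 1%nat = - g 0%nat 1%nat). { rewrite Hxe. unfold e. simpl. ring. }
      rewrite H. pose proof (coord_le (g 0%nat) 1%nat (Hg 0%nat)).
      pose proof (Hx4 0%nat 0%nat). pose proof (pow2_ge_0 (g 0%nat 1%nat)).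
      replace ((- g 0%nat 1%nat)^2) with (g 0%nat 1%nat ^2) by ring. nra.
    - assert (x k 0%nat = - g k 0%nat). { rewrite Hxe. unfold e. replace (Nat.eqb 0 k) with false. ring.
        symmetry. apply Nat.eqb_neq. auto. }
      rewrite H. pose proof (coord_le (g k) 0%nat (Hg k)).
      pose proof (Hx4 k 1%nat). pose proof (pow2_ge_0 (g k 0%nat)).
      replace ((- g k 0%nat)^2) with (g k 0%nat ^2) by ring. nra. }
  destruct (solve m b Hm Hs Hq Hb) as [a [Ha Heq]].
  assert (HS : hilbert_schmidt (Top a)).
  { split. split; [|split].
    - intros y Hy. apply Top_l2; auto.
    - intros y z c d Hy Hz n. unfold Top. ring.
    - exists (6 + 3 * sqnorm a). intros y Hy. eapply Rle_trans. apply Top_sq; auto.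
      pose proof (coord_le y 1%nat Hy). pose proof (coord_le y 0%nat Hy).
      assert (Series (fun n => a n ^2 * y n ^2) <= sqnorm a * sqnorm y).
      { unfold sqnorm at 2. rewrite <- Series_scal_l. apply Series_le.
        intros n. split. apply Rmult_le_pos; apply pow2_ge_0. apply Rmult_le_compat_r. apply pow2_ge_0. apply coord_le; auto.
        apply ex_scal_l; auto. }
      lra.
    - apply (ex_le _ (fun k => e 1 k * 3 + e 0 k * 3 + 3 * a k ^2)).
      + intros k. rewrite Rabs_right by (apply Rle_ge, sqnorm_nonneg, Top_l2, l2_e; auto).
        eapply Rle_trans. apply Top_sq; auto. apply l2_e.
        rewrite (Series_ext _ (fun n => e k n * (a n ^2))).
        2:{ intros n. rewrite e_sq. ring. }
        rewrite e_Series. rewrite !e_sq. rewrite (e_sym k 1), (e_sym k 0). lra.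
      + apply ex_plus. apply ex_plus; apply e_ex. apply ex_scal_l. apply (ex_ext (fun n => a n * a n)). intros; ring.
        apply l2_prod; auto. }
  assert (SA : self_adjoint (Top a)).
  { intros y z Hy Hz. unfold ip, Top.
    rewrite (Series_ext _ (fun n => e 0 n * (y 1%nat * z n) + e 1 n * (y 0%nat * z n) + (a n * y n) * z n)) by (intros; ring).
    rewrite (Series_ext (fun n => y n * _) (fun n => e 0 n * (z 1%nat * y n) + e 1 n * (z 0%nat * y n) + (a n * z n) * y n)) by (intros; ring).
    rewrite !Series_lin3; try apply e_ex; try (apply l2_prod; auto; apply l2_ay; auto).
    rewrite !e_Series.
    rewrite (Series_ext (fun n => a n * z n * y n) (fun n => a n * y n * z n)) by (intros; ring). ring. }
  assert (CK : forall k, ip (Top a (x k)) (x k) = 0).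
  { intros k. unfold ip, Top.
    rewrite (Series_ext _ (fun n => e 0 n * (x k 1%nat * x k n) + e 1 n * (x k 0%nat * x k n) + (m k n * a n + e k n * a n))).
    2:{ intros n. unfold m. ring. }
    rewrite Series_lin3; try apply e_ex.
    2:{ apply ex_plus. apply l2_prod; auto. apply e_ex. }
    rewrite Series_plus; [| apply l2_prod; auto | apply e_ex].
    rewrite !e_Series. specialize (Heq k). unfold Nop in Heq. unfold b in Heq. lra. }
  pose proof (Hinj (Top a) HS SA CK (e 0%nat) (l2_e 0%nat) 1%nat).
  unfold Top, e in H. simpl in H. lra.
Qed.
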